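(* Let $A\in\mathbb{R}^{m\times n}$ with $\operatorname{rk}(A)=m$, $b\in\mathbb{R}^m$, $P=\{x\in\mathbb{R}^n: Ax=b,\ x\ge\mathbb{0}\}$. Let $B\subseteq[n]$ be a feasible basis, $N=[n]\setminus B$, $x^*=(A_B^{-1}b,\mathbb{0}_N)\in P$, and let $x^{(0)}$ be a vertex of $P$. Consider the following procedure: for $t=0,1,\dots$, while $x^{(t)}\ne x^*$, take a conformal circuit decomposition $x^*-x^{(t)}=\sum_{j=1}^k h^{(j)}$ with $k\le n-m$, choose $g^{(t)}=h^{(j)}$ for some $j$ maximizing $\|h^{(j)}_N\|_1$, and set $x^{(t+1)}=\operatorname{aug}_P(x^{(t)},g^{(t)})$. Then for every iteration $t\ge 0$ of this procedure, $\|x^{(t+1)}_N\|_1\le\big(1-\frac{1}{n-m}\big)\|x^{(t)}_N\|_1$, and $|x^{(t+1)}_i-x^{(t)}_i|\le(n-m)|x^*_i-x^{(t)}_i|$ for all $i\in[n]$.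
   Context: An elementary vector of $\ker(A)$ is a nonzero $g\in\ker(A)$ with inclusion-minimal support among nonzero vectors of $\ker(A)$. Vectors $x,y$ are sign-compatible if $x_iy_i\ge0$ for all $i$; $x\sqsubseteq y$ means they are sign-compatible and $|x_i|\le|y_i|$ for all $i$. A conformal circuit decomposition of $x\in\ker(A)$ is an expression $x=\sum_{j=1}^k h^{(j)}$ with each $h^{(j)}$ an elementary vector of $\ker(A)$ and $h^{(j)}\sqsubseteq x$ (one with $k\le\dim\ker(A)=n-m$ always exists). For $x\in P$ and elementary $g$, $\operatorname{aug}_P(x,g)=x+\alpha g$ with $\alpha=\max\{\bar\alpha: x+\bar\alpha g\in P\}$. *)

(* Defs.v *)
(* Vectors in R^n are column vectors 'cV[R]_n; x i 0 is x_i. *)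
From mathcomp Require Import all_boot all_order all_algebra.
From mathcomp Require Import reals.
Set Implicit Arguments. Unset Strict Implicit. Unset Printing Implicit Defensive.
Import Order.TTheory GRing.Theory Num.Theory.
Local Open Scope ring_scope.

Section Defs.
Variables (R : realType) (m n : nat).
Implicit Types (A : 'M[R]_(m, n)) (b : 'cV[R]_m) (x y g h : 'cV[R]_n).

Definition inP A b x : Prop := A *m x = b /\ forall i, 0 <= x i 0.

Definition vertexP A b x : Prop :=
  inP A b x /\
  forall y z (lam : R), inP A b y -> inP A b z -> 0 < lam < 1 ->
    x = lam *: y + (1 - lam) *: z -> y = z.

Definition colsubB A (B : {set 'I_n}) : 'M[R]_(m, #|B|) :=
  \matrix_(i, j) A i (enum_val j).

Definition is_basis A (B : {set 'I_n}) : Prop :=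
  #|B| = m /\ \rank (colsubB A B) = m.

Definition supp x : {set 'I_n} := [set i | x i 0 != 0].

Definition elementary A g : Prop :=
  g != 0 /\ A *m g = 0 /\
  forall h, h != 0 -> A *m h = 0 -> supp h \subset supp g -> supp h = supp g.

Definition conf_le x y : Prop :=
  forall i, 0 <= x i 0 * y i 0 /\ `|x i 0| <= `|y i 0|.

Definition conf_circ_decomp A x (hs : seq 'cV[R]_n) : Prop :=
  (size hs <= n - m)%N /\
  (forall h, h \in hs -> elementary A h /\ conf_le h x) /\
  \sum_(h <- hs) h = x.

Definition is_aug A b x g y : Prop :=
  exists alpha : R,
    [/\ inP A b (x + alpha *: g),
        (forall a : R, inP A b (x + a *: g) -> a <= alpha) &
        y = x + alpha *: g].

Definition normN (B : {set 'I_n}) x : R := \sum_(i | i \notin B) `|x i 0|.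

End Defs.

(* Main.v *)
Require Import Defs.
From mathcomp Require Import all_boot all_order all_algebra.
From mathcomp Require Import reals.
From mathcomp Require Import lra.
Import Order.TTheory GRing.Theory Num.Theory.
Local Open Scope ring_scope.

Lemma kerB (R : realType) (m n : nat) (A : 'M[R]_(m, n)) (B : {set 'I_n}) (d : 'cV[R]_n) :
  is_basis A B -> A *m d = 0 -> (forall i, i \notin B -> d i 0 = 0) -> d = 0.
Proof.
move=> [cB rB] Ad dN.
pose v : 'rV[R]_#|B| := \row_j d (enum_val j) 0.
have hv : v *m (colsubB A B)^T = 0 *m (colsubB A B)^T.
  rewrite mul0mx; apply/matrixP => i j; rewrite (ord1 i) [RHS]mxE.
  have := congr1 (fun M : 'M[R]_(m,1) => M j 0) Ad; rewrite [RHS]mxE => <-.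
  rewrite !mxE.
  rewrite [RHS](bigID (fun k => k \in B)) /=.
  rewrite [X in _ = _ + X]big1; last by move=> k /dN ->; rewrite mulr0.
  rewrite addr0 [RHS]big_enum_val; apply: eq_bigr => k _; rewrite !mxE.
  by rewrite mulrC.
have fr : row_free (colsubB A B)^T.
  by rewrite /row_free mxrank_tr rB cB.
have v0 := row_free_inj fr hv.
apply/matrixP => i j; rewrite (ord1 j) mxE.
case: (boolP (i \in B)) => iB; last by rewrite dN.
have := congr1 (fun M : 'rV[R]_#|B| => M 0 (enum_rank_in iB i)) v0.
by rewrite !mxE enum_rankK_in.
Qed.

Lemma sum_const_seq (R : realType) (T : Type) (hs : seq T) (c : R) :
  \sum_(h <- hs) c = c *+ size hs.
Proof. by elim: hs => [|h hs IH]; rewrite ?big_nil ?big_cons ?IH ?mulrS. Qed.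

Theorem lemma3p1 (R : realType) (m n : nat) (A : 'M[R]_(m, n)) (b : 'cV[R]_m)
    (B : {set 'I_n}) (xstar : 'cV[R]_n) (xs : nat -> 'cV[R]_n) :
  \rank A = m ->
  is_basis A B ->
  A *m xstar = b -> (forall i, i \notin B -> xstar i 0 = 0) -> inP A b xstar ->
  vertexP A b (xs 0%N) ->
  (forall t : nat, (forall s, (s <= t)%N -> xs s != xstar) ->
     exists hs : seq 'cV[R]_n,
       conf_circ_decomp A (xstar - xs t) hs /\
       exists g, [/\ g \in hs,
                     (forall h, h \in hs -> normN B h <= normN B g) &
                     is_aug A b (xs t) g (xs t.+1)]) ->
  forall t : nat, (forall s, (s <= t)%N -> xs s != xstar) ->
    normN B (xs t.+1) <= (1 - ((n - m)%:R)^-1) * normN B (xs t) /\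
    (forall i, `|xs t.+1 i 0 - xs t i 0| <= (n - m)%:R * `|xstar i 0 - xs t i 0|).
Proof.
move=> rkA isB Axs xsN xsP v0 Hproc t Hne.
have xP : inP A b (xs t).
  case: t Hne => [|s] Hne; first by case: v0.
  have Hne' : forall s', (s' <= s)%N -> xs s' != xstar.
    by move=> s' le; apply: Hne; apply: leqW.
  have [hs [_ [g [_ _ [al [P1 _ ->]]]]]] := Hproc s Hne'.
  by [].
have [hs [[szhs [hsP hssum]] [g [gin gmax [al [yP almax yE]]]]]] := Hproc t Hne.
set x := xs t in xP hssum gmax almax yE yP *.
rewrite yE.
have [[gn0 [Ag _]] gconf] := hsP g gin.
have [Ax xnn] := xP.
have [_ xsnn] := xsP.
have al1 : 1 <= al.
  apply: almax; split; first by rewrite mulmxDr scale1r Ag addr0.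
  move=> i; rewrite !mxE mul1r.
  have [h1 h2] := gconf i.
  have := xnn i; have := xsnn i.
  move: h1 h2; rewrite !mxE.
  set gi := g i 0; set xi := x i 0; set si := xstar i 0 => h1 h2 hs0 hx0.
  case: (lerP 0 gi) => gs; first by lra.
  have : si - xi <= 0 by nra.
  move=> hd; move: h2; rewrite (ltr0_norm gs) (ler0_norm hd); lra.
have hN : forall h, h \in hs -> forall i, i \notin B -> h i 0 <= 0.
  move=> h hin i iB; have [_ /(_ i) [h1 h2]] := hsP h hin.
  move: h1 h2; rewrite !mxE xsN // sub0r.
  have := xnn i; set xi := x i 0; set hi := h i 0 => hx h1 h2.
  case: (lerP hi 0) => // hp.
  have xi0 : xi <= 0 by nra.
  have : xi = 0 by lra.
  by move=> e; move: h2; rewrite e oppr0 normr0 gtr0_norm //; lra.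
have xsum : forall i, i \notin B -> `|x i 0| = \sum_(h <- hs) `|h i 0|.
  move=> i iB.
  have : (xstar - x) i 0 = - x i 0 by rewrite !mxE xsN // sub0r.
  rewrite -hssum summxE => e.
  rewrite ger0_norm ?xnn // -[x i 0]opprK -e -sumrN.
  apply: eq_big_seq => h hin; rewrite ler0_norm //.
  exact: hN.
have nx : normN B x = \sum_(h <- hs) normN B h.
  rewrite /normN (eq_bigr _ xsum) exchange_big /=; by [].
have G0 : 0 <= normN B g by apply: sumr_ge0 => i _; exact: normr_ge0.
have nxg : normN B x <= (n - m)%:R * normN B g.
  rewrite nx (@le_trans _ _ (\sum_(h <- hs) normN B g)) //.
    by rewrite big_seq [X in _ <= X]big_seq; apply: ler_sum => h hin; exact: gmax.
  rewrite sum_const_seq -[_ *+ size hs]mulr_natl; apply: ler_wpM2r => //.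
  by rewrite ler_nat.
have ny : normN B (x + al *: g) = normN B x - al * normN B g.
  rewrite /normN mulr_sumr -sumrB; apply: eq_bigr => i iB.
  have [_ ynn] := yP; have := ynn i; rewrite !mxE => yi.
  rewrite (ger0_norm yi) (ger0_norm (xnn i)) (ler0_norm (hN g gin i iB)).
  by rewrite mulrN opprK.
have nyp : 0 <= normN B (x + al *: g) by apply: sumr_ge0 => i _; exact: normr_ge0.
have X0 : normN B x != 0.
  apply/negP => /eqP X0.
  have xN : forall i, i \notin B -> x i 0 = 0.
    move=> i iB; apply/eqP; rewrite -normr_eq0; apply/eqP.
    move: X0; rewrite /normN => /eqP; rewrite psumr_eq0; last by move=> k _; exact: normr_ge0.
    by move=> /allP /(_ i); rewrite mem_index_enum => /(_ isT); rewrite iB /= => /eqP.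
  have d0 : xstar - x = 0.
    apply: (@kerB R m n A B _ isB); first by rewrite mulmxBr Axs Ax subrr.
    by move=> i iB; rewrite !mxE xsN // xN // subrr.
  move: (Hne t (leqnn t)); rewrite -/x => /eqP; apply.
  by apply/eqP; rewrite eq_sym -subr_eq0 d0.
have Xp : 0 < normN B x by rewrite lt_def X0 /normN sumr_ge0 // => i _; exact: normr_ge0.
set K := (n - m)%:R : R in nxg *.
set X := normN B x in nx nxg ny X0 Xp *.
set G := normN B g in G0 nxg ny *.
have K0 : 0 < K.
  rewrite lt_def; apply/andP; split; last by rewrite ler0n.
  by apply/eqP => K0; move: nxg; rewrite K0 mul0r; lra.
have Gp : 0 < G by nra.
have alK : al <= K by nra.
split.
  rewrite ny.
  have kk : K * K^-1 = 1 by rewrite mulfV // gt_eqF.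
  have ki : 0 < K^-1 by rewrite invr_gt0.
  nra.
move=> i; rewrite mxE [_ i 0 + _]addrC addrK mxE normrM (ger0_norm (le_trans ler01 al1)).
have [_ h2] := gconf i; move: h2; rewrite [in X in _ <= X]mxE [(- xs t) i 0]mxE -/x => h2.
have u0 := normr_ge0 (g i 0).
apply: (le_trans (ler_wpM2r u0 alK)); apply: ler_wpM2l; [exact: ltW | done].
Qed.
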